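(* Let $S$ be a scheme on $X$ and $\mathbb F$ a field. If $S$ is triply regular, then $S$ has no bad pairs.
   Context: Let $X$ be a nonempty finite set. A scheme of class $d$ on $X$ is a partition $S=\{R_0,\dots,R_d\}$ of $X\times X$ into nonempty sets such that $R_0=\{(b,b):b\in X\}$; for each $c$ there is $c'$ with $R_{c'}=\{(f,e):(e,f)\in R_c\}$; and for all $i,j,k$ the intersection number $p_{ij}^k=|\{\ell\in X:(m,\ell)\in R_i,(\ell,n)\in R_j\}|$ does not depend on $(m,n)\in R_k$. The valency is $k_a=p_{aa'}^0$; complex product $R_aR_b=\{R_c:p_{ab}^c>0\}$. For $y\in X$, $yR_a=\{z:(y,z)\in R_a\}$; $A_a\in M_X(\mathbb F)$ is the $(0,1)$ adjacency matrix of $R_a$ and $E_a^*(y)$ is the diagonal $(0,1)$-matrix with ones exactly at positions indexed by $yR_a$. The products $E_i^*(y)A_jE_\ell^*(y)$ are the triple products at $y$. $S$ is triply regular if for every $y\in X$ the $\mathbb F$-linear span of all triple products $E_i^*(y)A_jE_\ell^*(y)$ ($R_i,R_j,R_\ell\in S$) is a unital $\mathbb F$-subalgebra of $M_X(\mathbb F)$. Bad pair: $(u,v)$ is a bad pair of $S$ if there exist an integer $a\ge1$ and $R_{i_b},R_{j_b},R_{\ell_b}\in S$ ($b=0,\dots,a$) with $i_0=u$, $\ell_a=v$, $k_{i_b}=k_{\ell_b}=2$ and $p_{i_bj_b}^{\ell_b}=1$ for all $b$, $\ell_c=i_{c+1}$ for $0\le c\le a-1$, and $|R_{u'}R_v|=1$.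 *)

(* Defs.v *)
From HB Require Import structures.
From mathcomp Require Import all_boot all_order all_algebra.
Set Implicit Arguments. Unset Strict Implicit. Unset Printing Implicit Defensive.
Import GRing.Theory.
Local Open Scope ring_scope.

(* A scheme of class d on a finite set X is encoded by the labelling
   r : X -> X -> 'I_d.+1, where r x y = c  iff  (x,y) \in R_c. The classes
   R_c = [set p | r p.1 p.2 == c] then partition X * X. *)
Section Scheme.
Variables (X : finType) (d : nat) (r : X -> X -> 'I_d.+1).

Definition rel_class (c : 'I_d.+1) : {set X * X} := [set p | r p.1 p.2 == c].

Definition inter_count (i j : 'I_d.+1) (m n : X) : nat :=
  #|[set l | (r m l == i) && (r l n == j)]|.

Definition is_scheme : Prop :=
  (forall c : 'I_d.+1, exists x y, r x y = c) /\
  (forall x y, r x y = ord0 <-> x = y) /\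
  (forall c : 'I_d.+1, exists c' : 'I_d.+1, forall x y, r y x = c' <-> r x y = c) /\
  (forall i j k : 'I_d.+1, forall m n m' n',
     r m n = k -> r m' n' = k -> inter_count i j m n = inter_count i j m' n').

Definition pnum (i j k : 'I_d.+1) : nat :=
  if [pick p : X * X | r p.1 p.2 == k] is Some p then inter_count i j p.1 p.2
  else 0.

Definition tr_idx (c : 'I_d.+1) : 'I_d.+1 :=
  if [pick c' : 'I_d.+1 | [forall x, forall y, (r y x == c') == (r x y == c)]]
    is Some c' then c' else c.

Definition valency (a : 'I_d.+1) : nat := pnum a (tr_idx a) ord0.

Definition complex_prod (a b : 'I_d.+1) : {set 'I_d.+1} :=
  [set c | 0 < pnum a b c]%N.

Definition bad_pair (u v : 'I_d.+1) : Prop :=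
  exists (a : nat) (i j l : nat -> 'I_d.+1),
    (1 <= a)%N /\ i 0%N = u /\ l a = v /\
    (forall b, (b <= a)%N ->
       valency (i b) = 2%N /\ valency (l b) = 2%N /\ pnum (i b) (j b) (l b) = 1%N) /\
    (forall c, (c < a)%N -> l c = i c.+1) /\
    #|complex_prod (tr_idx u) v| = 1%N.

(* Matrices indexed by X, realised as 'M[F]_#|X| via enum_val. *)
Variable F : fieldType.

Definition adj_mx (a : 'I_d.+1) : 'M[F]_#|X| :=
  \matrix_(s, t) (r (enum_val s) (enum_val t) == a)%:R.

Definition dual_idem (y : X) (a : 'I_d.+1) : 'M[F]_#|X| :=
  \matrix_(s, t) ((s == t) && (r y (enum_val s) == a))%:R.

Definition triple_prod (y : X) (i j l : 'I_d.+1) : 'M[F]_#|X| :=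
  dual_idem y i *m adj_mx j *m dual_idem y l.

(* the F-linear span of all triple products at y, as a row space of mxvecs *)
Definition triple_span (y : X) :=
  (\sum_(t : 'I_d.+1 * 'I_d.+1 * 'I_d.+1)
      <<mxvec (triple_prod y t.1.1 t.1.2 t.2)>>)%MS.

Definition in_span (y : X) (A : 'M[F]_#|X|) : bool :=
  (mxvec A <= triple_span y)%MS.

Definition unital_subalgebra_at (y : X) : Prop :=
  in_span y 1%:M /\
  (forall A B : 'M[F]_#|X|, in_span y A -> in_span y B -> in_span y (A *m B)).

Definition triply_regular : Prop := forall y : X, unital_subalgebra_at y.

End Scheme.

(* Main.v *)
Require Import Defs.
From HB Require Import structures.
From mathcomp Require Import all_boot all_order all_algebra.
Set Implicit Arguments. Unset Strict Implicit. Unset Printing Implicit Defensive.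
Import GRing.Theory.

Lemma pnum_eq (X : finType) (d : nat) (r : X -> X -> 'I_d.+1) i j k m n :
  is_scheme r -> r m n = k -> pnum r i j k = inter_count r i j m n.
Proof.
move=> [_ [_ [_ Hw]]] Hmn; rewrite /pnum; case: pickP => [p /eqP Hp | H].
  exact: Hw Hp Hmn.
by move: (H (m, n)); rewrite /= Hmn eqxx.
Qed.

Lemma tr_spec (X : finType) (d : nat) (r : X -> X -> 'I_d.+1) c x y :
  is_scheme r -> (r y x == tr_idx r c) = (r x y == c).
Proof.
move=> [_ [_ [Ht _]]]; rewrite /tr_idx; case: pickP => [c' /forallP H | H].
  by move: (H x) => /forallP /(_ y) /eqP.
case: (Ht c) => c' Hc'; move: (H c').
have -> : [forall x, forall y, (r y x == c') == (r x y == c)] = true.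
  apply/forallP => x'; apply/forallP => y'; apply/eqP; apply/idP/idP => /eqP h;
  apply/eqP; by apply/Hc'.
by [].
Qed.

Lemma valency_card (X : finType) (d : nat) (r : X -> X -> 'I_d.+1) a y :
  is_scheme r -> valency r a = #|[set z | r y z == a]|.
Proof.
move=> Hs; rewrite /valency (@pnum_eq _ _ _ _ _ _ y y) //; last first.
  by case: Hs => _ [H0 _]; apply/H0.
rewrite /inter_count; apply: eq_card => z; rewrite !inE tr_spec //.
by rewrite andbb.
Qed.

Lemma cp_mem (X : finType) (d : nat) (r : X -> X -> 'I_d.+1) u v y x z :
  is_scheme r -> r y x = u -> r y z = v -> r x z \in complex_prod r (tr_idx r u) v.
Proof.
move=> Hs Hx Hz; rewrite inE (@pnum_eq _ _ _ _ _ _ x z) // /inter_count card_gt0.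
apply/set0Pn; exists y; rewrite inE tr_spec // Hx Hz !eqxx.
by [].
Qed.
Local Open Scope ring_scope.
Lemma triple_prodE (F : fieldType) (X : finType) (d : nat) (r : X -> X -> 'I_d.+1) y i j l s t :
  triple_prod r F y i j l s t =
  ((r y (enum_val s) == i) && (r (enum_val s) (enum_val t) == j) && (r y (enum_val t) == l))%:R.
Proof.
rewrite /triple_prod mxE (bigD1 t) //= big1 => [|k Hk]; last first.
  by rewrite [dual_idem _ _ _ _ k t]mxE (negbTE Hk) mulr0.
rewrite addr0 mxE (bigD1 s) //= big1 => [|k Hk]; last first.
  by rewrite [dual_idem _ _ _ _ s k]mxE eq_sym (negbTE Hk) mul0r.
rewrite addr0 !mxE !eqxx /=.
by case: (r y _ == i); case: (r _ _ == j); case: (r y _ == l); rewrite /= ?mulr1 ?mul1r ?mulr0 ?mul0r.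
Qed.

Lemma gen_in_span (F : fieldType) (X : finType) (d : nat) (r : X -> X -> 'I_d.+1) y i j l :
  in_span r y (triple_prod r F y i j l).
Proof.
rewrite /in_span /triple_span.
apply: (sumsmx_sup (i, j, l)) => //.
by rewrite genmxE.
Qed.

Lemma mul_delta_cv (F : fieldType) m (v : 'rV[F]_m) (k : 'I_m) :
  (v *m delta_mx k (0 : 'I_1)) 0 0 = v 0 k.
Proof.
rewrite mxE (bigD1 k) //= big1 => [|x Hx]; last by rewrite mxE (negbTE Hx) mulr0.
by rewrite addr0 mxE !eqxx mulr1.
Qed.

Lemma span_invariant (F : fieldType) (X : finType) (d : nat) (r : X -> X -> 'I_d.+1) y u v s1 s2 t :
  is_scheme r -> #|complex_prod r (tr_idx r u) v| = 1%N ->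
  r y (enum_val s1) = u -> r y (enum_val s2) = u -> r y (enum_val t) = v ->
  forall A : 'M[F]_#|X|, in_span r y A -> A s1 t = A s2 t.
Proof.
move=> Hs Hc H1 H2 Ht A HA.
pose c : 'cV[F]_(#|X| * #|X|) :=
  delta_mx (mxvec_index s1 t) 0 - delta_mx (mxvec_index s2 t) 0.
have cE : forall B : 'M[F]_#|X|, (mxvec B *m c) 0 0 = B s1 t - B s2 t.
  move=> B; rewrite mulmxBr; set P := mxvec B *m _; set Q := mxvec B *m _.
  by rewrite mxE [(- Q) _ _]mxE /P /Q !mul_delta_cv !mxvecE.
have Hsub : (triple_span r F y <= kermx c)%MS.
  apply/sumsmx_subP => [[[i j] l]] _; rewrite genmxE sub_kermx.
  apply/eqP/matrixP => a b; rewrite !ord1 cE !triple_prodE /= mxE H1 H2 Ht.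
  move/eqP/cards1P: Hc => [w Hw].
  have := cp_mem Hs H1 Ht; have := cp_mem Hs H2 Ht; rewrite Hw !inE => /eqP -> /eqP ->.
  by rewrite subrr.
have := submx_trans HA Hsub; rewrite sub_kermx => /eqP /matrixP /(_ 0 0).
by rewrite cE mxE => /eqP; rewrite subr_eq0 => /eqP.
Qed.

Lemma col_T (F : fieldType) (X : finType) (d : nat) (r : X -> X -> 'I_d.+1) y i j l t :
  is_scheme r -> pnum r i j l = 1%N -> r y (enum_val t) = l ->
  exists k, r y (enum_val k) = i /\ forall s, triple_prod r F y i j l s t = (s == k)%:R.
Proof.
move=> Hs Hp Ht; move: Hp; rewrite (pnum_eq _ _ Hs Ht) /inter_count => /eqP/cards1P [x0 Hx0].
exists (enum_rank x0); split.
  have : x0 \in [set l0 | (r y l0 == i) && (r l0 (enum_val t) == j)] by rewrite Hx0 set11.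
  by rewrite inE enum_rankK => /andP [/eqP]. 
move=> s; rewrite triple_prodE Ht eqxx andbT.
have := f_equal (fun A : {set X} => enum_val s \in A) Hx0; rewrite /= !inE => ->.
by rewrite -[s == _](inj_eq enum_val_inj) enum_rankK.
Qed.

Fixpoint chainM (F : fieldType) (X : finType) (d : nat) (r : X -> X -> 'I_d.+1) y
  (i j l : nat -> 'I_d.+1) (b : nat) : 'M[F]_#|X| :=
  match b with
  | 0 => triple_prod r F y (i 0%N) (j 0%N) (l 0%N)
  | b'.+1 => chainM F r y i j l b' *m triple_prod r F y (i b) (j b) (l b)
  end.

Lemma chain_inv (F : fieldType) (X : finType) (d : nat) (r : X -> X -> 'I_d.+1) y
  (i j l : nat -> 'I_d.+1) (a : nat) :
  is_scheme r -> unital_subalgebra_at r F y ->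
  (forall b, (b <= a)%N -> pnum r (i b) (j b) (l b) = 1%N) ->
  (forall c, (c < a)%N -> l c = i c.+1) ->
  forall b, (b <= a)%N -> in_span r y (chainM F r y i j l b) /\
    forall t, r y (enum_val t) = l b -> exists g, r y (enum_val g) = i 0%N /\
      forall s, chainM F r y i j l b s t = (s == g)%:R.
Proof.
move=> Hs [_ Hmul] Hp Hl; elim => [|b IH] Hb.
  split; first exact: gen_in_span.
  move=> t Ht /=; exact: (col_T F Hs (Hp _ Hb) Ht).
have [IH1 IH2] := IH (ltnW Hb).
split; first by apply: Hmul => //; apply: gen_in_span.
move=> t Ht; have [k0 [Hk0 Hcol]] := col_T F Hs (Hp _ Hb) Ht.
rewrite -Hl // in Hk0.
have [g [Hg Hgs]] := IH2 _ Hk0.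
exists g; split => // s /=.
rewrite mxE (bigD1 k0) //= big1 => [|k Hk]; last by rewrite Hcol (negbTE Hk) mulr0.
by rewrite addr0 Hcol eqxx mulr1 Hgs.
Qed.

Theorem corollary4p11 (F : fieldType) (X : finType) (d : nat)
  (r : X -> X -> 'I_d.+1) :
  is_scheme r ->
  triply_regular r F ->
  forall u v : 'I_d.+1, ~ bad_pair r u v.
Proof.
move=> Hs Htr u v [a [i [j [l [Ha [Hi0 [Hla [Hb [Hl Hc]]]]]]]]].
have Hs' := Hs; case: Hs' => [Hne _]; have [y [_ _]] := Hne ord0.
have Hp : forall b, (b <= a)%N -> pnum r (i b) (j b) (l b) = 1%N.
  by move=> b hb; case: (Hb b hb) => _ [_ ->].
have [Hin Hcol] := chain_inv Hs (Htr y) Hp Hl (leqnn a).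
have Hvu : valency r u = 2%N by rewrite -Hi0; case: (Hb 0%N (leq0n _)).
have Hvv : valency r v = 2%N by rewrite -Hla; case: (Hb a (leqnn _)) => _ [].
have : (0 < #|[set z | r y z == v]|)%N by rewrite -(valency_card _ y Hs) Hvv.
rewrite card_gt0 => /set0Pn [z]; rewrite inE => /eqP Hz.
have Ht : r y (enum_val (enum_rank z)) = l a by rewrite enum_rankK Hz Hla.
have [g [Hg Hgs]] := Hcol _ Ht.
rewrite Hi0 in Hg.
have : (1 < #|[set z | r y z == u]|)%N by rewrite -(valency_card _ y Hs) Hvu.
move=> /card_gt1P [z1 [z2 [Hz1 Hz2 Hz12]]]; rewrite !inE in Hz1 Hz2.
pose s2 := if enum_rank z1 == g then enum_rank z2 else enum_rank z1.
have Hs2g : s2 != g.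
  rewrite /s2; have [E|NE] := eqVneq (enum_rank z1) g; last by []; rewrite -E.
  by apply: contra Hz12 => /eqP /(f_equal enum_val); rewrite !enum_rankK => ->.
have Hs2 : r y (enum_val s2) = u.
  by rewrite /s2; case: ifP => _; rewrite enum_rankK; apply/eqP.
have Hz' : r y (enum_val (enum_rank z)) = v by rewrite enum_rankK.
have := span_invariant Hs Hc Hg Hs2 Hz' Hin.
rewrite !Hgs eqxx (negbTE Hs2g) => /eqP; by rewrite oner_eq0.
Qed.
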